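(* Let $U$ be a finite nonempty set, $R$ an equivalence relation on $U$, and $M(R)$ the support matroid induced by $R$. For every $X\subseteq U$, $X$ is a closed set of $M(R)$ if and only if $X$ is a union of some elements of $U/R$ (the set of equivalence classes of $R$).
   Context: For $x\in U$, $RN(x)=\{y\in U\mid xRy\}$; $R^{*}(X)=\{x\in U\mid RN(x)\cap X\neq\emptyset\}$. Let $\mathbf{S}(R)=\{X\subseteq U\mid R^{*}(X)=U\}$. The support matroid $M(R)=(U,\mathbf{I}(R))$ is the matroid on $U$ whose independent sets $\mathbf{I}(R)$ are the subsets of inclusion-minimal members of $\mathbf{S}(R)$. For a matroid $(U,\mathbf{I})$, the rank is $r(X)=\max\{|I|\mid I\subseteq X, I\in\mathbf{I}\}$, the closure is $cl(X)=\{e\in U\mid r(X)=r(X\cup\{e\})\}$, and $X$ is closed if $cl(X)=X$. *)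

(* Defs.v *)
(* The universe U is the full finite type T, i.e. [set: T]. *)
From mathcomp Require Import all_boot.
Set Implicit Arguments. Unset Strict Implicit. Unset Printing Implicit Defensive.

Section Support.
Variables (T : finType) (R : rel T).

Definition RN (x : T) : {set T} := [set y | R x y].

Definition Rstar (X : {set T}) : {set T} := [set x | RN x :&: X != set0].

Definition SR : {set {set T}} := [set X | Rstar X == [set: T]].

Definition indepR : {set {set T}} :=
  [set I : {set T} | [exists B : {set T}, minset (fun Y => Y \in SR) B && (I \subset B)]].

Definition rankR (X : {set T}) : nat :=
  \max_(I in indepR | I \subset X) #|I|.

Definition clR (X : {set T}) : {set T} :=
  [set e | rankR X == rankR (e |: X)].

Definition closedR (X : {set T}) : Prop := clR X = X.

Definition quotR : {set {set T}} := [set RN x | x in T].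

End Support.

(* Main.v *)
Require Import Defs.
From mathcomp Require Import all_boot.
Set Implicit Arguments. Unset Strict Implicit. Unset Printing Implicit Defensive.

Section Proof8.
Variables (T : finType) (R : rel T).
Hypotheses (Hrefl : reflexive R) (Hsym : symmetric R) (Htrans : transitive R).

Definition ptrans (I : {set T}) := forall x y, x \in I -> y \in I -> R x y -> x = y.

Lemma inSR (X : {set T}) : (X \in SR R) <-> (forall z, exists2 y, y \in X & R z y).
Proof.
rewrite inE /Rstar; split.
- move/eqP/setP=> H z; move: (H z); rewrite !inE => /set0Pn [y].
  by rewrite !inE => /andP[Hzy Hy]; exists y.
- move=> H; apply/eqP/setP=> z; rewrite !inE; apply/set0Pn.
  by case: (H z)=> y Hy Hzy; exists y; rewrite !inE Hzy Hy.
Qed.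

Lemma min_ptrans B : minset (fun Y => Y \in SR R) B -> ptrans B.
Proof.
move/minsetP=> [HB Hmin] x y Hx Hy Hxy; case: (eqVneq x y) => // Hne.
have Hsub : B :\ y \subset B by apply: subsetDl.
have HS : B :\ y \in SR R.
  apply/inSR=> z; have [w Hw Hzw] := (proj1 (inSR B) HB) z.
  case: (eqVneq w y) => [Ewy|Nwy].
  - subst w; exists x; first by rewrite !inE Hx andbT; apply/negP => /eqP Exy; rewrite Exy eqxx in Hne.
    by apply: Htrans Hzw _; rewrite Hsym.
  - by exists w; rewrite // !inE Nwy.
move: (Hmin _ HS Hsub) => /setP /(_ y); by rewrite !inE eqxx Hy.
Qed.

Lemma indep_ptrans I : I \in indepR R -> ptrans I.
Proof.
rewrite inE => /existsP [B /andP [HB HIB]] x y Hx Hy.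
by apply: (min_ptrans HB); apply: (subsetP HIB).
Qed.

Definition canon (z : T) : T := odflt z [pick w in RN R z].

Lemma canon_R z : R z (canon z).
Proof.
rewrite /canon; case: pickP => [w|] /=; first by rewrite inE.
by move/(_ z); rewrite inE Hrefl.
Qed.

Lemma RN_eq z z' : R z z' -> RN R z = RN R z'.
Proof.
move=> H; apply/setP=> w; rewrite !inE; apply/idP/idP => Hw.
- by apply: Htrans Hw; rewrite Hsym.
- by apply: Htrans Hw.
Qed.

Lemma canon_eq z z' : R z z' -> canon z = canon z'.
Proof.
move=> H; rewrite /canon (RN_eq H); case: pickP => [//|] /=.
by move/(_ z'); rewrite inE Hrefl.
Qed.

Lemma ptrans_indep I : ptrans I -> I \in indepR R.
Proof.
move=> HI.
set C := I :|: [set canon z | z in [set z | [forall w in I, ~~ R z w]]].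
have HC : ptrans C.
  have key : forall x y, x \in I -> y \in C -> R x y -> x = y.
    move=> x y Hx; rewrite inE => /orP [Hy|]; first by apply: HI.
    case/imsetP=> z; rewrite inE => /forallP /(_ x); rewrite Hx /= => Hzx -> Hxy.
    exfalso; move/negP: Hzx; apply; rewrite Hsym.
    have Hcz : R (canon z) z by rewrite Hsym; exact: canon_R.
    exact: (Htrans Hxy Hcz).
  move=> x y; rewrite {1}inE => /orP [Hx Hy Hxy|Hx]; first by apply: key.
  move=> Hy; move: (Hy); rewrite {1}inE => /orP [Hy' Hxy|Hy' Hxy].
    symmetry; apply: (key y x Hy'); first by rewrite inE Hx orbT.
    by rewrite Hsym.
  case/imsetP: Hx => z _ Ex; case/imsetP: Hy' => z' _ Ey; subst x y.
  apply: canon_eq; apply: (Htrans (canon_R z)).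
  have Hcz : R (canon z') z' by rewrite Hsym; exact: canon_R.
  exact: (Htrans Hxy Hcz).
have HSC : C \in SR R.
  apply/inSR=> z; case: (boolP [forall w in I, ~~ R z w]) => H.
  - exists (canon z); last exact: canon_R.
    by rewrite inE; apply/orP; right; apply/imsetP; exists z; rewrite ?inE.
  - move/forallPn: H => [w]; rewrite negb_imply negbK => /andP [Hw Hzw].
    by exists w; rewrite // inE Hw.
rewrite inE; apply/existsP; exists C; apply/andP; split; last exact: subsetUl.
apply/minsetP; split => // D HD HDC; apply/setP => c.
apply/idP/idP => [|Hc]; first by apply: (subsetP HDC).
have [d Hd Hcd] := (proj1 (inSR D) HD) c.
by rewrite (HC c d Hc (subsetP HDC d Hd) Hcd).
Qed.

Lemma indepP I : reflect (ptrans I) (I \in indepR R).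
Proof. by apply: (iffP idP); [apply: indep_ptrans | apply: ptrans_indep]. Qed.

Lemma rank_le (I X : {set T}) : I \in indepR R -> I \subset X -> #|I| <= rankR R X.
Proof. by move=> H1 H2; rewrite /rankR; apply: (@leq_bigmax_cond _ (fun I => (I \in indepR R) && (I \subset X))); rewrite H1. Qed.

Lemma rank_mono (X Y : {set T}) : X \subset Y -> rankR R X <= rankR R Y.
Proof.
move=> HXY; apply/bigmax_leqP => I /andP [H1 H2].
by apply: rank_le => //; apply: subset_trans HXY.
Qed.

Lemma clP (X : {set T}) e : reflect (exists2 x, x \in X & R e x) (e \in clR R X).
Proof.
rewrite inE; apply: (iffP idP).
- move=> Heq; case: (boolP [exists x in X, R e x]) => [/exists_inP //|Hn]; exfalso.
  have H : forall I, (I \in indepR R) && (I \subset X) -> #|I| < rankR R (e |: X).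
    move=> I /andP [HI HIX].
    have eI : e \notin I.
      apply/negP => HeI; move/negP: Hn; apply; apply/exists_inP; exists e.
      - exact: (subsetP HIX).
      - exact: Hrefl.
    have := @rank_le (e |: I) (e |: X); rewrite cardsU1 eI add1n; apply.
    + apply/indepP => x y; rewrite !inE => /orP [/eqP->|Hx] /orP [/eqP->|Hy] //.
      * move=> Hey; exfalso; move/negP: Hn; apply; apply/exists_inP; exists y => //.
        exact: (subsetP HIX).
      * move=> Hxe; exfalso; move/negP: Hn; apply; apply/exists_inP; exists x => //.
        exact: (subsetP HIX). by rewrite Hsym.
      * by apply: (indep_ptrans HI).
    + exact: setUS.
  have H0 : 0 < rankR R (e |: X).
    rewrite -(cards0 T); apply: (H set0); rewrite sub0set andbT; apply/indepP => x y; by rewrite inE.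
  have : rankR R X <= (rankR R (e |: X)).-1.
    by apply/bigmax_leqP => I HI; rewrite -ltnS prednK //; apply: H.
  by rewrite (eqP Heq) -ltnS prednK // ltnn.
- move=> [x Hx Hex]; rewrite eqn_leq rank_mono ?subsetUr //=.
  apply/bigmax_leqP => I /andP [HI HIX].
  case: (boolP (e \in I)) => HeI; last first.
    apply: rank_le => //; apply/subsetP => y Hy.
    move: (subsetP HIX y Hy); rewrite !inE => /orP [/eqP Hye|//].
    by rewrite -Hye Hy in HeI.
  case: (boolP (e \in X)) => HeX.
    apply: rank_le => //; apply/subsetP => y Hy.
    by move: (subsetP HIX y Hy); rewrite !inE => /orP [/eqP ->|//].
  have xI : x \notin I.
    apply/negP => HxI; have Eex := indep_ptrans HI HeI HxI Hex.
    by move: HeX; rewrite Eex Hx.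
  have -> : #|I| = #|x |: (I :\ e)|.
    by rewrite cardsU1 (cardsD1 e I) HeI !inE (negbTE xI) andbF.
  apply: rank_le.
  + apply/indepP => u v; rewrite !inE.
    have Hp := indep_ptrans HI.
    move=> /orP [/eqP->|/andP [Hue Hu]] /orP [/eqP->|/andP [Hve Hv]] // Huv.
    * exfalso; move/negP: Hve; apply; apply/eqP; apply: Hp => //.
      by rewrite Hsym; exact: (Htrans Hex Huv).
    * exfalso; move/negP: Hue; apply; apply/eqP; apply: Hp => //.
      by apply: (Htrans Huv); rewrite Hsym.
    * by apply: Hp.
  + apply/subsetP => y; rewrite !inE => /orP [/eqP->//|/andP [Hye Hy]].
    by move: (subsetP HIX y Hy); rewrite !inE (negbTE Hye).
Qed.

End Proof8.

Theorem proposition8 (T : finType) (R : rel T)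
    (HT : 0 < #|T|)
    (Hrefl : reflexive R) (Hsym : symmetric R) (Htrans : transitive R)
    (X : {set T}) :
  closedR R X <-> exists P : {set {set T}}, P \subset quotR R /\ X = cover P.
Proof.
rewrite /closedR; split.
- move=> Hcl; exists [set RN R x | x in X]; split.
    by apply/subsetP => B /imsetP [x _ ->]; apply/imsetP; exists x.
  apply/setP => u; apply/idP/bigcupP.
  + by move=> Hu; exists (RN R u); [apply/imsetP; exists u | rewrite inE Hrefl].
  + case=> B /imsetP [x Hx ->]; rewrite inE => Hxu.
    rewrite -Hcl; apply/(clP Hrefl Hsym Htrans); exists x => //; by rewrite Hsym.
- move=> [P [HP ->]]; apply/setP => e; apply/idP/idP.
  + case/(clP Hrefl Hsym Htrans) => x /bigcupP [B HB Hx] Hex.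
    apply/bigcupP; exists B => //.
    move/subsetP: HP => /(_ B HB) /imsetP [z _ Ez]; subst B.
    move: Hx; rewrite !inE => Hzx; apply: Htrans Hzx _; by rewrite Hsym.
  + by move=> He; apply/(clP Hrefl Hsym Htrans); exists e.
Qed.
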